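(* In the setup of the context, for all $x,y,z\in B$: (a) $\gamma_{x,y,z}$ and $n_x$ do not depend on the choice of the balanced representations $\rho_\lambda$; more precisely, $\sum_\lambda f_\lambda^{-1}v^{3a_\lambda}\chi_\lambda(xyz)$ and $\sum_\lambda f_\lambda^{-1}v^{a_\lambda}\chi_\lambda(x^\ast)$ lie in $\mathcal{O}$ and $\gamma_{x,y,z}\equiv\sum_{\lambda\in\Lambda}f_\lambda^{-1}v^{3a_\lambda}\chi_\lambda(xyz)\pmod{\mathfrak m}$, $\ n_x\equiv\sum_{\lambda\in\Lambda}f_\lambda^{-1}v^{a_\lambda}\chi_\lambda(x^\ast)\pmod{\mathfrak m}$; (b) $\gamma_{x,y,z}=\gamma_{y,z,x}$; (c) $\sum_{z\in B}\gamma_{x^\ast,y,z}\,n_z=\delta_{xy}$; (d) $\gamma_{x,y,z}=\gamma_{y^\ast,x^\ast,z^\ast}$; (e) $n_x=n_{x^\ast}$.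
   Context: Setup: $\Gamma$ totally ordered abelian group; $K$ field with surjective valuation $\nu:K\to\Gamma\cup\{\infty\}$, valuation ring $\mathcal{O}$, maximal ideal $\mathfrak m$, residue field $F=\mathcal{O}/\mathfrak m$ which is formally real. $H$ a finite-dimensional split semisimple symmetric $K$-algebra with trace form $\tau$, $\ast$ a $K$-linear involutive antiautomorphism, $B$ a $\ast$-symmetric basis ($B^\ast=B$, $\tau(bc^\ast)=\delta_{bc}$). Simple modules indexed by $\Lambda$, characters $\chi_\lambda$, Schur elements $c_\lambda$ ($\tau=\sum c_\lambda^{-1}\chi_\lambda$), $a_\lambda:=-\tfrac12\nu(c_\lambda)$, which lies in $\Gamma$. Fix a partial section: a group homomorphism $\Gamma_0:=\langle a_\lambda\mid\lambda\in\Lambda\rangle\to K^\times$, $\gamma\mapsto v^\gamma$, with $\nu(v^\gamma)=\gamma$; put $f_\lambda:=v^{2a_\lambda}c_\lambda\in\mathcal{O}^\times$ (viewed in $F$ via reduction when appropriate). An irreducible matrix representation $\rho:H\to K^{d\times d}$ of type $\lambda$ is balanced if $\nu(\rho(b))\ge-a_\lambda$ for all $b$ in every $\ast$-symmetric basis. For each $\lambda$ choose a balanced $\rho_\lambda:H\to K^{d_\lambda\times d_\lambda}$ of type $\lambda$ and put $c^\lambda(x):=v^{a_\lambda}\rho_\lambda(x)\bmod\mathfrak m\in F^{d_\lambda\times d_\lambda}$. Define $\gamma_{x,y,z}:=\sum_\lambda\sum_{\mathfrak s,\mathfrak t,\mathfrak u}f_\lambda^{-1}c^\lambda(x)_{\mathfrak{st}}c^\lambda(y)_{\mathfrak{tu}}c^\lambda(z)_{\mathfrak{us}}\in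 F$ and $n_x:=\sum_\lambda\sum_{\mathfrak s}f_\lambda^{-1}c^\lambda(x^\ast)_{\mathfrak{ss}}\in F$. *)

(* Defs.v *)
From HB Require Import structures.
From mathcomp Require Import all_boot all_order all_algebra all_field.

Set Implicit Arguments.
Unset Strict Implicit.
Unset Printing Implicit Defensive.

Import Order.TTheory GRing.Theory Num.Theory.
Local Open Scope ring_scope.

Definition ordered_group (G : porderZmodType) : Prop :=
  (forall x y : G, (x <= y) || (y <= x)) /\
  (forall x y z : G, x <= y -> x + z <= y + z).

(* Gamma u {oo} is modelled by option Gamma, with None = oo. *)
Definition vle (G : porderZmodType) (x y : option G) : bool :=
  match y with
  | None => true
  | Some b => match x with None => false | Some a => a <= b end
  end.

Definition vadd (G : porderZmodType) (x y : option G) : option G :=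
  match x, y with Some a, Some b => Some (a + b) | _, _ => None end.

Definition vmin (G : porderZmodType) (x y : option G) : option G :=
  if vle x y then x else y.

Definition is_valuation (G : porderZmodType) (K : fieldType)
  (nu : K -> option G) : Prop :=
  [/\ forall x, nu x = None <-> x = 0,
      forall x y, nu (x * y) = vadd (nu x) (nu y),
      forall x y, vle (vmin (nu x) (nu y)) (nu (x + y)) &
      forall g, exists x, nu x = g].

Definition inO (G : porderZmodType) (K : fieldType) (nu : K -> option G)
  (x : K) : bool := vle (Some 0) (nu x).

Definition inm (G : porderZmodType) (K : fieldType) (nu : K -> option G)
  (x : K) : bool :=
  match nu x with None => true | Some g => 0 < g end.

(* red : K -> F restricted to O is the residue map O -> O/m = F, i.e. a
   surjective ring morphism O -> F with kernel m (values outside O are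
   irrelevant). *)
Definition is_residue_map (G : porderZmodType) (K F : fieldType)
  (nu : K -> option G) (red : K -> F) : Prop :=
  [/\ red 1 = 1,
      forall x y, inO nu x -> inO nu y -> red (x + y) = red x + red y,
      forall x y, inO nu x -> inO nu y -> red (x * y) = red x * red y,
      forall x, inO nu x -> (red x == 0) = inm nu x &
      forall f, exists x, inO nu x /\ red x = f].

Definition formally_real (F : fieldType) : Prop :=
  forall s : seq F, \sum_(t <- s) t ^+ 2 != - 1.

Section Algebra.
Variables (K : fieldType) (H : falgType K).

Definition is_invol_antiaut (star : H -> H) : Prop :=
  [/\ forall (k : K) x y, star (k *: x + y) = k *: star x + star y,
      forall x y, star (x * y) = star y * star x &
      forall x, star (star x) = x].

Definition is_trace_form (tau : H -> K) : Prop :=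
  [/\ forall (k : K) x y, tau (k *: x + y) = k * tau x + tau y,
      forall x y, tau (x * y) = tau (y * x) &
      forall x, (forall y, tau (x * y) = 0) -> x = 0].

Definition star_sym_basis (tau : H -> K) (star : H -> H) (B : seq H) : Prop :=
  [/\ basis_of fullv B,
      {in B, forall b, star b \in B} &
      {in B &, forall b c, tau (b * star c) = (b == c)%:R}].

Definition is_rep (n : nat) (rho : H -> 'M[K]_n) : Prop :=
  [/\ forall (k : K) x y, rho (k *: x + y) = k *: rho x + rho y,
      rho 1 = 1%:M &
      forall x y, rho (x * y) = rho x *m rho y].

(* H is split semisimple with simple modules indexed by L, realised by the
   irreducible representations rho0 l (Wedderburn: x |-> (rho0 l x)_l is an
   isomorphism H ~ prod_l K^{d_l x d_l}). *)
Definition split_semisimple (L : finType) (d : L -> nat)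
  (rho0 : forall l, H -> 'M[K]_(d l)) : Prop :=
  [/\ forall l, (0 < d l)%N,
      forall l, is_rep (rho0 l),
      forall x y, (forall l, rho0 l x = rho0 l y) -> x = y &
      forall M : (forall l, 'M[K]_(d l)), exists x, forall l, rho0 l x = M l].

Definition chi (L : finType) (d : L -> nat)
  (rho0 : forall l, H -> 'M[K]_(d l)) (l : L) (x : H) : K :=
  \tr (rho0 l x).

Definition of_type (n : nat) (rho rho0 : H -> 'M[K]_n) : Prop :=
  is_rep rho /\
  exists P : 'M[K]_n, P \in unitmx /\ forall x, rho x = invmx P *m rho0 x *m P.

Definition balanced (G : porderZmodType) (nu : K -> option G)
  (tau : H -> K) (star : H -> H) (al : G) (n : nat) (rho : H -> 'M[K]_n)
  : Prop :=
  forall B', star_sym_basis tau star B' ->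
  forall b, b \in B' -> forall i j, vle (Some (- al)) (nu (rho b i j)).

End Algebra.

Definition in_Gamma0 (G : porderZmodType) (L : finType) (a : L -> G)
  (g : G) : Prop :=
  exists k : L -> int, g = \sum_l a l *~ k l.

Definition partial_section (G : porderZmodType) (K : fieldType)
  (nu : K -> option G) (L : finType) (a : L -> G) (v : G -> K) : Prop :=
  (forall g h, in_Gamma0 a g -> in_Gamma0 a h -> v (g + h) = v g * v h) /\
  (forall g, in_Gamma0 a g -> v g != 0 /\ nu (v g) = Some g).

Section Structure.
Variables (G : porderZmodType) (K F : fieldType) (red : K -> F)
  (H : falgType K) (star : H -> H) (L : finType) (d : L -> nat)
  (c : L -> K) (a : L -> G) (v : G -> K)
  (rho : forall l, H -> 'M[K]_(d l)).

Definition fl (l : L) : K := v (a l *+ 2) * c l.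

Definition cmat (l : L) (x : H) : 'M[F]_(d l) :=
  map_mx red (v (a l) *: rho l x).

Definition gammaF (x y z : H) : F :=
  \sum_l \sum_(s < d l) \sum_(t < d l) \sum_(u < d l)
    (red (fl l))^-1 * cmat l x s t * cmat l y t u * cmat l z u s.

Definition nF (x : H) : F :=
  \sum_l \sum_(s < d l) (red (fl l))^-1 * cmat l (star x) s s.

End Structure.

Definition S3 (G : porderZmodType) (K : fieldType) (H : falgType K)
  (L : finType) (d : L -> nat) (rho0 : forall l, H -> 'M[K]_(d l))
  (c : L -> K) (a : L -> G) (v : G -> K) (x y z : H) : K :=
  \sum_l (fl c a v l)^-1 * v (a l *+ 3) * chi rho0 l (x * y * z).

Definition S1 (G : porderZmodType) (K : fieldType) (H : falgType K)
  (star : H -> H)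
  (L : finType) (d : L -> nat) (rho0 : forall l, H -> 'M[K]_(d l))
  (c : L -> K) (a : L -> G) (v : G -> K) (x : H) : K :=
  \sum_l (fl c a v l)^-1 * v (a l) * chi rho0 l (star x).

(* Main.v *)
Require Import Defs.
From HB Require Import structures.
From mathcomp Require Import all_boot all_order all_algebra all_field.
Set Implicit Arguments.
Unset Strict Implicit.
Unset Printing Implicit Defensive.
Import Order.TTheory GRing.Theory Num.Theory.
Local Open Scope ring_scope.
Section Lin.
Variables (K : fieldType) (U V : lmodType K) (f : U -> V).
Hypothesis hf : forall k x y, f (k *: x + y) = k *: f x + f y.
Lemma lin0 : f 0 = 0.
Proof.
have := hf 1 0 0; rewrite !scale1r addr0 => h.
have : f 0 + 0 = f 0 + f 0 by rewrite addr0 -h.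
by move/addrI.
Qed.
Lemma linD x y : f (x + y) = f x + f y.
Proof. by have := hf 1 x y; rewrite !scale1r. Qed.
Lemma linZ k x : f (k *: x) = k *: f x.
Proof. by have := hf k x 0; rewrite !addr0 lin0 addr0. Qed.
Lemma lin_sum (I : Type) (r : seq I) (P : pred I) (g : I -> U) :
  f (\sum_(i <- r | P i) g i) = \sum_(i <- r | P i) f (g i).
Proof. elim/big_rec2: _ => [|i y1 y2 _ <-]; [exact: lin0 | exact: linD]. Qed.
End Lin.

Section LinK.
Variables (K : fieldType) (U : lmodType K) (f : U -> K).
Hypothesis hf : forall k x y, f (k *: x + y) = k * f x + f y.
Lemma klin0 : f 0 = 0.
Proof.
have := hf 1 0 0; rewrite scale1r addr0 mul1r => h.
have : f 0 + 0 = f 0 + f 0 by rewrite addr0 -h.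
by move/addrI.
Qed.
Lemma klinD x y : f (x + y) = f x + f y.
Proof. by have := hf 1 x y; rewrite scale1r mul1r. Qed.
Lemma klinZ k x : f (k *: x) = k * f x.
Proof. by have := hf k x 0; rewrite !addr0 klin0 addr0. Qed.
Lemma klin_sum (I : Type) (r : seq I) (P : pred I) (g : I -> U) :
  f (\sum_(i <- r | P i) g i) = \sum_(i <- r | P i) f (g i).
Proof. elim/big_rec2: _ => [|i y1 y2 _ <-]; [exact: klin0 | exact: klinD]. Qed.
End LinK.

Lemma delta_sum (T : eqType) (R : pzSemiRingType) (r : seq T) (c : T) (f : T -> R) :
  uniq r -> c \in r -> \sum_(b <- r) f b * (b == c)%:R = f c.
Proof.
move=> ur cr; rewrite (bigD1_seq c) //= eqxx mulr1 big1 ?addr0 // => b /negbTE ->.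
by rewrite mulr0.
Qed.

Lemma delta_sum' (T : eqType) (R : pzSemiRingType) (r : seq T) (c : T) (f : T -> R) :
  uniq r -> c \in r -> \sum_(b <- r) f b * (c == b)%:R = f c.
Proof.
move=> ur cr; rewrite -(delta_sum f ur cr); apply: eq_bigr => b _; by rewrite eq_sym.
Qed.

Lemma fr_seq (F : fieldType) : formally_real F ->
  forall s : seq F, \sum_(t <- s) t ^+ 2 = 0 -> forall t, t \in s -> t = 0.
Proof.
move=> fr s hs t0 ts; apply/eqP; apply/negP => t0n.
have := fr [seq t / t0 | t <- rem t0 s]; rewrite big_map.
have e : t0 ^+ 2 + \sum_(t <- rem t0 s) t ^+ 2 = 0.
  by move: hs; rewrite (perm_big _ (perm_to_rem ts)) big_cons.
under eq_bigr do rewrite expr_div_n.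
rewrite -mulr_suml (_ : \sum_(t <- rem t0 s) t ^+ 2 = - t0 ^+ 2).
  by rewrite mulNr mulfV ?expf_neq0 ?eqxx //; apply/negP.
by apply/eqP; rewrite -addr_eq0 addrC e.
Qed.

Lemma fr_fam (F : fieldType) (I : eqType) (r : seq I) (n : nat) (g : I -> 'I_n -> F) :
  formally_real F -> \sum_(b <- r) \sum_i g b i ^+ 2 = 0 ->
  forall b i, b \in r -> g b i = 0.
Proof.
move=> fr hs b i br.
have := fr_seq fr (s := flatten [seq [seq g b i | i <- enum 'I_n] | b <- r]).
rewrite big_flatten big_map.
under eq_bigr do rewrite big_map big_enum.
move=> /(_ hs); apply; apply/flattenP.
exists [seq g b i | i <- enum 'I_n]; first by apply/mapP; exists b.
by apply/mapP; exists i => //; rewrite mem_enum.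
Qed.

Section Main.
Variables (G : porderZmodType) (K F : fieldType)
  (nu : K -> option G) (red : K -> F)
  (H : falgType K) (tau : H -> K) (star : H -> H) (B : seq H)
  (L : finType) (d : L -> nat) (rho0 : forall l, H -> 'M[K]_(d l))
  (c : L -> K) (a : L -> G) (v : G -> K)
  (rho : forall l, H -> 'M[K]_(d l)).
Hypothesis OG : ordered_group G.
Hypothesis NU : is_valuation nu.
Hypothesis RED : is_residue_map nu red.
Hypothesis FR : formally_real F.
Hypothesis TF : is_trace_form tau.
Hypothesis ST : is_invol_antiaut star.
Hypothesis SB : star_sym_basis tau star B.
Hypothesis SS : split_semisimple rho0.
Hypothesis CNZ : forall l, c l != 0.
Hypothesis TAU : forall x, tau x = \sum_l (c l)^-1 * chi rho0 l x.
Hypothesis NUC : forall l, nu (c l) = Some (- (a l *+ 2)).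
Hypothesis PS : partial_section nu a v.
Hypothesis OT : forall l, of_type (rho l) (rho0 l).
Hypothesis BAL : forall l, balanced nu tau star (a l) (rho l).

Lemma vle_trans (x y z : option G) : vle x y -> vle y z -> vle x z.
Proof.
case: z => [z0|] //; case: y => [y0|] //; case: x => [x0|] //= ab bc.
exact: le_trans ab bc.
Qed.

Lemma ge0D (x y : G) : 0 <= x -> 0 <= y -> 0 <= x + y.
Proof.
case: OG => _ mon hx hy.
have := mon _ _ y hx; rewrite add0r => h.
exact: le_trans hy h.
Qed.

Lemma inO0 : inO nu 0.
Proof. by rewrite /inO; case: NU => h _ _ _; have [_ ->] := h 0. Qed.

Lemma inOD x y : inO nu x -> inO nu y -> inO nu (x + y).
Proof.
rewrite /inO => hx hy; case: NU => _ _ hm _.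
apply: vle_trans (hm x y); rewrite /vmin; by case: ifP.
Qed.

Lemma inOM x y : inO nu x -> inO nu y -> inO nu (x * y).
Proof.
rewrite /inO; case: NU => _ hm _ _; rewrite hm.
case: (nu x) => [x0|] //; case: (nu y) => [y0|] //=; exact: ge0D.
Qed.

Lemma inO_sum (I : Type) (r : seq I) (P : pred I) (f : I -> K) :
  (forall i, P i -> inO nu (f i)) -> inO nu (\sum_(i <- r | P i) f i).
Proof.
move=> h; elim/big_ind: _ => //; [exact: inO0 | exact: inOD].
Qed.

Lemma red0 : red 0 = 0.
Proof.
case: RED => _ hD _ _ _; have := hD 0 0 inO0 inO0; rewrite addr0 => h.
have : red 0 + 0 = red 0 + red 0 by rewrite addr0 -h.
by move/addrI.
Qed.

Lemma red_sum (I : Type) (r : seq I) (P : pred I) (f : I -> K) :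
  (forall i, P i -> inO nu (f i)) -> red (\sum_(i <- r | P i) f i) = \sum_(i <- r | P i) red (f i).
Proof.
move=> h; case: RED => _ hD _ _ _.
elim: r => [|x r IH]; first by rewrite !big_nil red0.
rewrite !big_cons; case: ifP => Px //.
by rewrite hD ?IH //; [exact: h | exact: inO_sum].
Qed.

Lemma redM x y : inO nu x -> inO nu y -> red (x * y) = red x * red y.
Proof. by case: RED => _ _ h _ _; apply: h. Qed.

Lemma redD x y : inO nu x -> inO nu y -> red (x + y) = red x + red y.
Proof. by case: RED => _ h _ _ _; apply: h. Qed.

Lemma nu1 : nu 1 = Some 0.
Proof.
case: NU => h0 hm _ _.
have := hm 1 1; rewrite mulr1.
case E: (nu 1) => [g|] /=.
  move=> [e]; congr Some.
  by apply: (@addrI _ g); rewrite addr0 -e.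
by move: E => /h0 /eqP; rewrite oner_eq0.
Qed.

Lemma inO1 : inO nu 1.
Proof. by rewrite /inO nu1 /= lexx. Qed.

Lemma red1 : red 1 = 1.
Proof. by case: RED. Qed.

Lemma inO_nat b : inO nu (b%:R).
Proof. elim: b => [|n IH]; [exact: inO0|rewrite mulrS; exact: inOD inO1 IH]. Qed.

Lemma red_nat n : red (n%:R) = n%:R.
Proof.
elim: n => [|n IH]; first exact: red0.
by rewrite mulrS redD ?inO1 ?inO_nat // red1 IH -mulrS.
Qed.

Lemma unit_inv u : nu u = Some 0 -> nu u^-1 = Some 0.
Proof.
move=> hu; case: NU => h0 hm _ _.
have u0 : u != 0 by apply/eqP => e; move: hu; rewrite (proj2 (h0 u) e).
have := hm u u^-1; rewrite mulfV // nu1 hu.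
case: (nu u^-1) => [g|] //= [e]; congr Some; by rewrite e add0r.
Qed.

Lemma unit_inO u : nu u = Some 0 -> inO nu u.
Proof. by move=> hu; rewrite /inO hu /= lexx. Qed.

Lemma red_inv u : nu u = Some 0 -> red u^-1 = (red u)^-1 /\ red u != 0.
Proof.
move=> hu; have hi := unit_inv hu.
case: NU => h0 _ _ _.
have u0 : u != 0 by apply/eqP => e; move: hu; rewrite (proj2 (h0 u) e).
have e : red u * red u^-1 = 1 by rewrite -redM ?unit_inO // mulfV // red1.
have ru0 : red u != 0 by apply/eqP => r0; move: e; rewrite r0 mul0r => /eqP; rewrite eq_sym oner_eq0.
by split => //; rewrite -[LHS]mul1r -(mulVf ru0) -mulrA e mulr1.
Qed.

Lemma inO_shift (g x : G) (y z : K) : nu y = Some g -> vle (Some (- g)) (nu z) -> inO nu (y * z).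
Proof.
move=> hy hz; case: NU => _ hm _ _; rewrite /inO hm hy.
case: OG => _ mon.
move: hz; case: (nu z) => [w|] //= hw.
have := mon _ _ g hw; by rewrite addNr addrC.
Qed.
Lemma tau_lin : forall k x y, tau (k *: x + y) = k * tau x + tau y.
Proof. by case: TF. Qed.
Lemma tauC x y : tau (x * y) = tau (y * x).
Proof. by case: TF. Qed.
Lemma star_lin : forall (k : K) x y, star (k *: x + y) = k *: star x + star y.
Proof. by case: ST. Qed.
Lemma starM x y : star (x * y) = star y * star x.
Proof. by case: ST. Qed.
Lemma starK x : star (star x) = x.
Proof. by case: ST. Qed.

Lemma uniqB : uniq B.
Proof. by case: SB => /andP[_ /free_uniq]. Qed.
Lemma starB b : b \in B -> star b \in B.
Proof. by case: SB => _ h _; apply: h. Qed.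
Lemma tauB b b2 : b \in B -> b2 \in B -> tau (b * star b2) = (b == b2)%:R.
Proof. by case: SB => _ _ h; apply: h. Qed.

Lemma perm_star : perm_eq (map star B) B.
Proof.
apply: uniq_perm; [|exact: uniqB|].
  rewrite map_inj_uniq ?uniqB //; exact: (can_inj starK).
move=> x; apply/mapP/idP => [[b bB ->]|xB]; first exact: starB.
by exists (star x); [exact: starB | rewrite starK].
Qed.

Lemma sum_star (R : nmodType) (f : H -> R) :
  \sum_(b <- B) f (star b) = \sum_(b <- B) f b.
Proof. by rewrite -(big_map star xpredT f); apply: perm_big; exact: perm_star. Qed.

Lemma tauN x : tau (- x) = - tau x.
Proof. by rewrite -scaleN1r (klinZ tau_lin) mulN1r. Qed.
Lemma tauBr x y : tau (x - y) = tau x - tau y.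
Proof. by rewrite (klinD tau_lin) tauN. Qed.
Lemma tauZ k x : tau (k *: x) = k * tau x.
Proof. exact: (klinZ tau_lin). Qed.
Lemma tau_sum (I : Type) (r : seq I) (P : pred I) (g : I -> H) :
  tau (\sum_(i <- r | P i) g i) = \sum_(i <- r | P i) tau (g i).
Proof. exact: (klin_sum tau_lin). Qed.

Lemma expand h : h = \sum_(b <- B) tau (h * star b) *: b.
Proof.
apply/eqP; rewrite -subr_eq0; apply/eqP.
set r := h - _.
case: TF => _ _ nd; apply: nd => y.
have hc : forall c, c \in B -> tau (r * c) = 0.
  move=> c1 cB; rewrite -[c1]starK; set c' := star c1.
  have c'B : c' \in B by exact: starB.
  rewrite /r mulrBl mulr_suml tauBr tau_sum.
  under eq_bigr do rewrite -scalerAl tauZ.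
  rewrite big_seq; under eq_bigr => b bB do rewrite (tauB bB c'B); rewrite -big_seq.
  by rewrite (delta_sum _ uniqB c'B) subrr.
case: SB => /andP[/eqP spanB _] _ _.
have yB : y \in <<in_tuple B>>%VS by rewrite spanB memvf.
rewrite (coord_span yB) mulr_sumr tau_sum big1 // => i _.
by rewrite -scalerAr tauZ hc ?mulr0 // mem_nth.
Qed.

Lemma expand' h : h = \sum_(b <- B) tau (b * h) *: star b.
Proof.
rewrite {1}(expand h) -(sum_star (fun b => tau (h * star b) *: b)).
apply: eq_bigr => b _; by rewrite starK tauC.
Qed.
Lemma rho_lin l : forall k x y, rho l (k *: x + y) = k *: rho l x + rho l y.
Proof. by case: (OT l) => [[]]. Qed.
Lemma rhoM l x y : rho l (x * y) = rho l x *m rho l y.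
Proof. by case: (OT l) => [[]]. Qed.
Lemma rho_sum l (I : Type) (r : seq I) (P : pred I) (g : I -> H) :
  rho l (\sum_(i <- r | P i) g i) = \sum_(i <- r | P i) rho l (g i).
Proof. exact: (lin_sum (rho_lin l)). Qed.
Lemma rhoZ l k x : rho l (k *: x) = k *: rho l x.
Proof. exact: (linZ (rho_lin l)). Qed.

Lemma chi_rho l x : chi rho0 l x = \tr (rho l x).
Proof.
case: (OT l) => _ [P [Pu hP]].
by rewrite hP /chi mxtrace_mulC mulmxA mulmxV // mul1mx.
Qed.

Lemma tau_rho x : tau x = \sum_l (c l)^-1 * \tr (rho l x).
Proof. by rewrite TAU; apply: eq_bigr => l _; rewrite chi_rho. Qed.

Lemma rho_surj (M : forall l, 'M[K]_(d l)) : exists x, forall l, rho l x = M l.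
Proof.
have [P hP] := fin_all_exists (fun l => proj2 (OT l)).
case: SS => _ _ _ surj.
have [x hx] := surj (fun l => P l *m M l *m invmx (P l)).
exists x => l; case: (hP l) => Pu ->.
by rewrite hx !mulmxA mulVmx // mul1mx -mulmxA mulVmx // mulmx1.
Qed.

Lemma schur lam mu (i j : 'I_(d lam)) (k m : 'I_(d mu)) :
  \sum_(b <- B) rho lam b i j * rho mu (star b) k m
  = ((lam == mu) && (i == m :> nat) && (j == k :> nat))%:R * c mu.
Proof.
pose M := fun nn => \matrix_(p < d nn, q < d nn)
   ((nn == mu) && (p == m :> nat) && (q == k :> nat))%:R : 'M[K]_(d nn).
have [e he] := rho_surj M.
have taue : forall y, tau (e * y) = (c mu)^-1 * rho mu y k m.
  move=> y; rewrite tau_rho (bigD1 mu) //= big1 ?addr0.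
    congr (_ * _); rewrite rhoM he /M mxtrace_mulC /mxtrace.
    rewrite (bigD1 k) //= big1 ?addr0.
      rewrite !mxE (bigD1 m) //= big1 ?addr0.
        by rewrite !mxE !eqxx mulr1.
      by move=> p /negbTE pm; rewrite !mxE eqxx /= (_ : (p == m :> nat) = false) ?mulr0 //.
    move=> q /negbTE qk; rewrite !mxE big1 // => p _; rewrite !mxE.
    by rewrite (_ : (q == k :> nat) = false) ?andbF ?mulr0 //.
  move=> nn /negbTE num; rewrite rhoM he /M.
  rewrite (_ : \matrix_(p, q) _ = 0) ?mul0mx ?mxtrace0 ?mulr0 //.
  by apply/matrixP => p q; rewrite !mxE num.
have : rho lam e i j = \sum_(b <- B) rho lam b i j * rho mu (star b) k m / c mu.
  rewrite {1}(expand e) rho_sum summxE; apply: eq_bigr => b _.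
  by rewrite rhoZ mxE taue mulrC [_^-1 * _]mulrC mulrA.
rewrite -mulr_suml he /M mxE => ->.
by rewrite -mulrA mulVf ?mulr1.
Qed.

Lemma star_sum (I : Type) (r : seq I) (P : pred I) (g : I -> H) :
  star (\sum_(i <- r | P i) g i) = \sum_(i <- r | P i) star (g i).
Proof. exact: (lin_sum star_lin). Qed.
Lemma starZ k x : star (k *: x) = k *: star x.
Proof. exact: (linZ star_lin). Qed.

Definition Omega l := \sum_(b <- B) (rho l (star b))^T *m rho l (star b).

Lemma casimir l h : (rho l (star h))^T *m Omega l = Omega l *m rho l h.
Proof.
rewrite /Omega mulmx_sumr mulmx_suml.
transitivity (\sum_(b <- B) \sum_(c0 <- B)
   tau (h * b * star c0) *: ((rho l (star c0))^T *m rho l (star b))).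
  apply: eq_bigr => b _.
  rewrite mulmxA -trmx_mul -rhoM -starM. have E := expand (h * b). rewrite {1}E.
  rewrite star_sum rho_sum linear_sum mulmx_suml; apply: eq_bigr => c0 _.
  by rewrite starZ rhoZ linearZ /= scalemxAl.
apply: (etrans (y := \sum_(b <- B) \sum_(c0 <- B)
   tau (c0 * (star b * h)) *: ((rho l (star b))^T *m rho l (star c0)))).
  rewrite exchange_big /=; apply: eq_bigr => b _; apply: eq_bigr => c0 _.
  by rewrite -mulrA tauC -mulrA.
apply: eq_bigr => b _.
rewrite -mulmxA -rhoM [in RHS](expand' (star b * h)).
rewrite rho_sum mulmx_sumr; apply: eq_bigr => c0 _.
by rewrite rhoZ scalemxAr.
Qed.
Definition mxO m n (A : 'M[K]_(m, n)) := forall i j, inO nu (A i j).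

Lemma mxO_mul m n p (A : 'M[K]_(m, n)) (Bm : 'M[K]_(n, p)) :
  mxO A -> mxO Bm -> mxO (A *m Bm) /\ map_mx red (A *m Bm) = map_mx red A *m map_mx red Bm.
Proof.
move=> hA hB; split.
  move=> i j; rewrite mxE; apply: inO_sum => k _; exact: inOM.
apply/matrixP => i j; rewrite !mxE red_sum; last by move=> k _; exact: inOM.
by apply: eq_bigr => k _; rewrite redM // !mxE.
Qed.

Lemma mxO_sum m n (I : eqType) (r : seq I) (M : I -> 'M[K]_(m, n)) :
  (forall i, i \in r -> mxO (M i)) ->
  mxO (\sum_(i <- r) M i) /\ map_mx red (\sum_(i <- r) M i) = \sum_(i <- r) map_mx red (M i).
Proof.
move=> hM; split.
  move=> p q; rewrite summxE big_seq; apply: inO_sum => i ir; exact: hM.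
apply/matrixP => p q; rewrite !mxE summxE.
rewrite big_seq red_sum; last by move=> i ir; exact: hM.
by rewrite -big_seq summxE; apply: eq_bigr => i _; rewrite mxE.
Qed.

Lemma mxO_tr m n (A : 'M[K]_(m, n)) : mxO A -> mxO A^T /\ map_mx red A^T = (map_mx red A)^T.
Proof. by move=> hA; split; [move=> i j; rewrite mxE | rewrite map_trmx]. Qed.

Lemma red_trace n (A : 'M[K]_n) : mxO A -> inO nu (\tr A) /\ red (\tr A) = \tr (map_mx red A).
Proof.
move=> hA; split; first by apply: inO_sum => i _.
rewrite /mxtrace red_sum //; apply: eq_bigr => i _; by rewrite mxE.
Qed.


Lemma in_G0 n l : in_Gamma0 a (a l *+ n).
Proof.
exists (fun l' => if l' == l then n%:Z else 0).
rewrite (bigD1 l) //= eqxx big1 ?addr0 // => l' /negbTE ->; exact: mulr0z.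
Qed.

Lemma nu_v n l : nu (v (a l *+ n)) = Some (a l *+ n).
Proof. by case: PS => _ h; case: (h _ (in_G0 n l)). Qed.

Lemma vM n m l : v (a l *+ (n + m)%N) = v (a l *+ n) * v (a l *+ m).
Proof. case: PS => h _; rewrite mulrnDr; apply: h; exact: in_G0. Qed.

Lemma nu_fl l : nu (fl c a v l) = Some 0.
Proof.
case: NU => _ hm _ _; rewrite /fl hm nu_v NUC /=; by rewrite subrr.
Qed.

Definition Am l x := v (a l) *: rho l x.

Lemma mxO_A l x : x \in B -> mxO (Am l x).
Proof.
move=> xB i j; rewrite /Am mxE.
apply: (@inO_shift (a l) (a l)); first by rewrite -[a l]mulr1n nu_v.
exact: (BAL SB xB).
Qed.

Lemma cmE l x : cmat red a v rho l x = map_mx red (Am l x).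
Proof. by []. Qed.


Notation cm := (cmat red a v rho).
Notation fb l := (red (fl c a v l)).

Lemma gamma_tr x y z : gammaF red c a v rho x y z =
  \sum_l (fb l)^-1 * \tr (cm l x *m cm l y *m cm l z).
Proof.
apply: eq_bigr => l _; rewrite /mxtrace mulr_sumr; apply: eq_bigr => s _.
rewrite mxE mulr_sumr exchange_big /=; apply: eq_bigr => u _.
rewrite [(_ *m _) s u]mxE mulr_suml mulr_sumr; apply: eq_bigr => t _.
by rewrite !mulrA.
Qed.

Lemma nF_tr x : nF red star c a v rho x = \sum_l (fb l)^-1 * \tr (cm l (star x)).
Proof. by apply: eq_bigr => l _; rewrite /mxtrace mulr_sumr. Qed.

Lemma inv_fl l : inO nu (fl c a v l)^-1 /\ red (fl c a v l)^-1 = (fb l)^-1 /\ fb l != 0.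
Proof.
have h := nu_fl l; split; first exact: unit_inO (unit_inv h).
exact: red_inv h.
Qed.

Lemma AmM l x y : Am l x *m Am l y = (v (a l) * v (a l)) *: rho l (x * y).
Proof. by rewrite /Am -scalemxAl -scalemxAr scalerA rhoM. Qed.

Lemma S3_red x y z : x \in B -> y \in B -> z \in B ->
  inO nu (S3 rho0 c a v x y z) /\
  red (S3 rho0 c a v x y z) = \sum_l (fb l)^-1 * \tr (cm l x *m cm l y *m cm l z).
Proof.
move=> xB yB zB.
have e : forall l, (fl c a v l)^-1 * v (a l *+ 3) * chi rho0 l (x * y * z)
    = (fl c a v l)^-1 * \tr (Am l x *m Am l y *m Am l z).
  move=> l; rewrite -mulrA chi_rho; congr (_ * _).
  rewrite AmM /Am -scalemxAl -scalemxAr scalerA -rhoM mxtraceZ; congr (_ * _).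
  by rewrite (vM 1 2) (vM 1 1) !mulr1n mulrA.
have hO : forall l, mxO (Am l x *m Am l y *m Am l z).
  move=> l; apply: (proj1 (mxO_mul _ _)); last exact: mxO_A.
  apply: (proj1 (mxO_mul _ _)); exact: mxO_A.
have hT : forall l, inO nu ((fl c a v l)^-1 * \tr (Am l x *m Am l y *m Am l z)).
  move=> l; apply: inOM; first exact: (proj1 (inv_fl l)).
  exact: (proj1 (red_trace (hO l))).
split.
  rewrite /S3; under eq_bigr do rewrite e.
  exact: inO_sum.
rewrite /S3; under eq_bigr do rewrite e.
rewrite red_sum //; apply: eq_bigr => l _.
have [iO [ri _]] := inv_fl l.
rewrite redM //; last exact: (proj1 (red_trace (hO l))).
rewrite ri (proj2 (red_trace (hO l))).
have [O1 ->] := mxO_mul (proj1 (mxO_mul (mxO_A (l:=l) xB) (mxO_A (l:=l) yB))) (mxO_A (l:=l) zB).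
by rewrite (proj2 (mxO_mul (mxO_A (l:=l) xB) (mxO_A (l:=l) yB))).
Qed.

Lemma S1_red x : x \in B ->
  inO nu (S1 star rho0 c a v x) /\
  red (S1 star rho0 c a v x) = \sum_l (fb l)^-1 * \tr (cm l (star x)).
Proof.
move=> xB; have sB := starB xB.
have e : forall l, (fl c a v l)^-1 * v (a l) * chi rho0 l (star x)
    = (fl c a v l)^-1 * \tr (Am l (star x)).
  by move=> l; rewrite -mulrA chi_rho /Am mxtraceZ.
have hT : forall l, inO nu ((fl c a v l)^-1 * \tr (Am l (star x))).
  move=> l; apply: inOM; first exact: (proj1 (inv_fl l)).
  exact: (proj1 (red_trace (mxO_A (l:=l) sB))).
rewrite /S1; under eq_bigr do rewrite e.
split; first exact: inO_sum.
rewrite red_sum //; apply: eq_bigr => l _.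
have [iO [ri _]] := inv_fl l.
rewrite redM //; last exact: (proj1 (red_trace (mxO_A (l:=l) sB))).
by rewrite ri (proj2 (red_trace (mxO_A (l:=l) sB))).
Qed.


Lemma cmE' l x i j : cm l x i j = red (Am l x i j).
Proof. by rewrite mxE. Qed.

Lemma gamma_cyc x y z : gammaF red c a v rho x y z = gammaF red c a v rho y z x.
Proof.
rewrite !gamma_tr; apply: eq_bigr => l _; congr (_ * _).
by rewrite -mulmxA mxtrace_mulC.
Qed.

Lemma schurF lam mu (i j : 'I_(d lam)) (k m : 'I_(d mu)) :
  \sum_(b <- B) cm lam b i j * cm mu (star b) k m
  = ((lam == mu) && (i == m :> nat) && (j == k :> nat))%:R * fb mu.
Proof.
have hO : forall b, b \in B -> inO nu (Am lam b i j * Am mu (star b) k m).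
  by move=> b bB; apply: inOM; [exact: mxO_A | apply: mxO_A; exact: starB].
rewrite big_seq.
under eq_bigr => b bB do rewrite !cmE' -redM ?(mxO_A (l:=lam) bB) ?(mxO_A (l:=mu) (starB bB)) //.
rewrite -red_sum; last exact: hO.
rewrite -big_seq.
have -> : \sum_(b <- B) Am lam b i j * Am mu (star b) k m
   = v (a lam) * v (a mu) * \sum_(b <- B) rho lam b i j * rho mu (star b) k m.
  rewrite mulr_sumr; apply: eq_bigr => b _; by rewrite !mxE mulrACA.
rewrite schur.
have -> : v (a lam) * v (a mu) *
    (((lam == mu) && (i == m :> nat) && (j == k :> nat))%:R * c mu)
  = ((lam == mu) && (i == m :> nat) && (j == k :> nat))%:R * fl c a v mu.
  case: eqP => [e|_] /=; last by rewrite !mul0r mulr0.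
  subst mu; rewrite mulrCA /fl (vM 1 1) !mulr1n mulrA //.
rewrite redM ?red_nat //; [exact: inO_nat | exact: unit_inO (nu_fl mu)].
Qed.


Lemma v_nz l : v (a l) * v (a l) != 0.
Proof.
by case: PS => _ h; rewrite mulf_neq0 //; case: (h _ (in_G0 1 l)); rewrite mulr1n.
Qed.

Lemma red_flsum (M : forall l, 'M[K]_(d l)) : (forall l, mxO (M l)) ->
  inO nu (\sum_l (fl c a v l)^-1 * \tr (M l)) /\
  red (\sum_l (fl c a v l)^-1 * \tr (M l)) = \sum_l (fb l)^-1 * \tr (map_mx red (M l)).
Proof.
move=> hM.
have hT : forall l, inO nu ((fl c a v l)^-1 * \tr (M l)).
  move=> l; apply: inOM; first exact: (proj1 (inv_fl l)).
  exact: (proj1 (red_trace (hM l))).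
split; first exact: inO_sum.
rewrite red_sum //; apply: eq_bigr => l _.
have [iO [ri _]] := inv_fl l.
rewrite redM //; last exact: (proj1 (red_trace (hM l))).
by rewrite ri (proj2 (red_trace (hM l))).
Qed.

Lemma dual x y : x \in B -> y \in B ->
  \sum_l (fb l)^-1 * \tr (cm l (star x) *m cm l y) = (x == y)%:R.
Proof.
move=> xB yB.
have hM : forall l, mxO (Am l (star x) *m Am l y).
  move=> l; apply: (proj1 (mxO_mul _ _)); apply: mxO_A => //; exact: starB.
have e : forall l, map_mx red (Am l (star x) *m Am l y) = cm l (star x) *m cm l y.
  move=> l; apply: (proj2 (mxO_mul _ _)); apply: mxO_A => //; exact: starB.
under eq_bigr do rewrite -e.
rewrite -(proj2 (red_flsum hM)) eq_sym -red_nat -tauB // tauC tau_rho.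
congr red; apply: eq_bigr => l _.
rewrite AmM mxtraceZ mulrA; congr (_ * _).
rewrite /fl (vM 1 1) !mulr1n invfM mulrAC mulVf ?mul1r //; exact: v_nz.
Qed.

Lemma innerN lam (u s : 'I_(d lam)) :
  \sum_(z <- B) cm lam z u s * nF red star c a v rho z = (u == s)%:R.
Proof.
rewrite /nF.
under eq_bigr => z _ do rewrite mulr_sumr.
rewrite exchange_big /=.
have -> : \sum_mu \sum_(z <- B) cm lam z u s *
     \sum_(k < d mu) (fb mu)^-1 * cm mu (star z) k k
   = \sum_mu \sum_(k < d mu) ((lam == mu) && (u == k :> nat) && (s == k :> nat))%:R.
  apply: eq_bigr => mu _.
  under eq_bigr => z _ do rewrite mulr_sumr.
  rewrite exchange_big /=; apply: eq_bigr => k _.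
  have [_ [_ fn]] := inv_fl mu.
  have -> : \sum_(z <- B) cm lam z u s * ((fb mu)^-1 * cm mu (star z) k k)
     = (fb mu)^-1 * \sum_(z <- B) cm lam z u s * cm mu (star z) k k.
    by rewrite mulr_sumr; apply: eq_bigr => z _; rewrite mulrCA.
  by rewrite schurF mulrCA mulVf ?mulr1.
rewrite (bigD1 lam) //= [X in _ + X]big1 ?addr0; last first.
  move=> mu /negbTE mul; apply: big1 => k _.
  by rewrite eq_sym mul.
rewrite eqxx (bigD1 u) //= [X in _ + X]big1 ?addr0; last first.
  by move=> k /negbTE ku; rewrite (_ : (u == k :> nat) = (u == k)) // eq_sym ku.
by rewrite !eqxx /= (_ : (s == u :> nat) = (s == u)) // eq_sym.
Qed.


Lemma partC x y : x \in B -> y \in B ->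
  \sum_(z <- B) gammaF red c a v rho (star x) y z * nF red star c a v rho z = (x == y)%:R.
Proof.
move=> xB yB; rewrite -dual //.
rewrite /gammaF; under eq_bigr => z _ do rewrite mulr_suml.
rewrite exchange_big /=; apply: eq_bigr => lam _.
rewrite /mxtrace mulr_sumr; under eq_bigr => z _ do rewrite mulr_suml.
rewrite exchange_big /=; apply: eq_bigr => s _.
rewrite mxE mulr_sumr; under eq_bigr => z _ do rewrite mulr_suml.
rewrite exchange_big /=; apply: eq_bigr => t _.
under eq_bigr => z _ do rewrite mulr_suml.
rewrite exchange_big /=.
have -> : \sum_(u < d lam) \sum_(z <- B)
   (fb lam)^-1 * cm lam (star x) s t * cm lam y t u * cm lam z u s * nF red star c a v rho z
   = \sum_(u < d lam) (fb lam)^-1 * cm lam (star x) s t * cm lam y t u * (u == s)%:R.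
  apply: eq_bigr => u _; rewrite -innerN mulr_sumr; apply: eq_bigr => z _.
  by rewrite !mulrA.
rewrite (bigD1 s) //= eqxx mulr1 big1 ?addr0; first by rewrite mulrA.
by move=> u /negbTE ->; rewrite mulr0.
Qed.


Definition Om l := \sum_(b <- B) (cm l (star b))^T *m cm l (star b).

Lemma Om_rel l x : x \in B -> (cm l (star x))^T *m Om l = Om l *m cm l x.
Proof.
move=> xB.
pose Ov := \sum_(b <- B) (Am l (star b))^T *m Am l (star b).
have hb : forall b, b \in B -> mxO ((Am l (star b))^T *m Am l (star b)).
  move=> b bB; have sB := starB bB.
  exact: (proj1 (mxO_mul (proj1 (mxO_tr (mxO_A (l:=l) sB))) (mxO_A (l:=l) sB))).
have [OvO Ovr] := mxO_sum hb.
have OvE : map_mx red Ov = Om l.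
  rewrite Ovr; apply: eq_big_seq => b bB; have sB := starB bB.
  rewrite (proj2 (mxO_mul (proj1 (mxO_tr (mxO_A (l:=l) sB))) (mxO_A (l:=l) sB))).
  by rewrite (proj2 (mxO_tr (mxO_A (l:=l) sB))).
have sxB := starB xB.
have key : (Am l (star x))^T *m Ov = Ov *m Am l x.
  have -> : Ov = (v (a l) * v (a l)) *: Omega l.
    rewrite /Ov /Omega scaler_sumr; apply: eq_bigr => b _.
    by rewrite /Am !linearZ /= -scalemxAl scalerA.
  rewrite /Am !linearZ /= -?scalemxAl -?scalemxAr casimir !scalerA.
  by rewrite mulrA.
have := congr1 (map_mx red) key.
rewrite (proj2 (mxO_mul (proj1 (mxO_tr (mxO_A (l:=l) sxB))) OvO)).
rewrite (proj2 (mxO_mul OvO (mxO_A (l:=l) xB))).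
by rewrite (proj2 (mxO_tr (mxO_A (l:=l) sxB))) OvE.
Qed.


Lemma schurF' l (i j k m : 'I_(d l)) :
  \sum_(b <- B) cm l (star b) i j * cm l b k m
  = ((i == m :> nat) && (j == k :> nat))%:R * fb l.
Proof.
have := schurF i j k m; rewrite eqxx /= => <-.
rewrite -(sum_star (fun b => cm l b i j * cm l (star b) k m)).
by apply: eq_bigr => b _; rewrite starK.
Qed.

Lemma Om_ker l (w : 'rV[F]_(d l)) : w *m Om l = 0 -> w = 0.
Proof.
move=> hw.
pose g b (i : 'I_(d l)) := (cm l (star b) *m w^T) i 0.
have hs : \sum_(b <- B) \sum_i g b i ^+ 2 = 0.
  have : (w *m Om l *m w^T) 0 0 = 0 by rewrite hw mul0mx mxE.
  rewrite /Om mulmx_sumr mulmx_suml summxE => h; apply: etrans _ h; apply: eq_bigr => b _.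
  rewrite mulmxA -mulmxA -[w *m _]trmxK trmx_mul trmxK mxE.
  by apply: eq_bigr => i _; rewrite mxE expr2.
have g0 := fr_fam FR hs.
apply/rowP => k; rewrite mxE.
have [_ [_ fn]] := inv_fl l.
have e1 : \sum_j w 0 j * \sum_(b <- B) cm l (star b) k j * cm l b k k = w 0 k * fb l.
  under eq_bigr do rewrite schurF'.
  rewrite (bigD1 k) //= eqxx /= mul1r [X in _ + X]big1 ?addr0 //.
  by move=> j /negbTE jk; rewrite (_ : (j == k :> nat) = (j == k)) // jk mul0r mulr0.
have e2 : \sum_j w 0 j * \sum_(b <- B) cm l (star b) k j * cm l b k k = 0.
  under eq_bigr do rewrite mulr_sumr.
  rewrite exchange_big /= big_seq big1 // => b bB.
  rewrite (_ : \sum_j _ = g b k * cm l b k k); first by rewrite g0 ?mul0r.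
  rewrite /g [(_ *m _) k 0]mxE mulr_suml.
  by apply: eq_bigr => j _; rewrite [w^T j 0]mxE mulrA [w 0 j * _]mulrC.
by move: e1; rewrite e2 => /esym /eqP; rewrite mulf_eq0 (negbTE fn) orbF => /eqP.
Qed.

Lemma Om_unit l : Om l \in unitmx.
Proof.
rewrite -row_free_unit -kermx_eq0; apply/eqP/row_matrixP => i.
rewrite row0; apply: Om_ker.
by rewrite -row_mul mulmx_ker row0.
Qed.


Lemma cm_star l x : x \in B -> cm l (star x) = (Om l *m cm l x *m invmx (Om l))^T.
Proof.
move=> xB; apply: trmx_inj; rewrite trmxK -(@Om_rel l x xB) mulmxK //; exact: Om_unit.
Qed.

Lemma tr_conj l (X : 'M[F]_(d l)) : \tr (Om l *m X *m invmx (Om l)) = \tr X.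
Proof. by rewrite mxtrace_mulC mulmxA mulVmx ?Om_unit // mul1mx. Qed.

Lemma partE x : x \in B -> nF red star c a v rho x = nF red star c a v rho (star x).
Proof.
move=> xB; rewrite !nF_tr starK; apply: eq_bigr => l _.
by rewrite cm_star // mxtrace_tr tr_conj.
Qed.

Lemma partD x y z : x \in B -> y \in B -> z \in B ->
  gammaF red c a v rho x y z = gammaF red c a v rho (star y) (star x) (star z).
Proof.
move=> xB yB zB; rewrite !gamma_tr; apply: eq_bigr => l _; congr (_ * _).
have PM : forall A Bm : 'M[F]_(d l),
  (Om l *m A *m invmx (Om l)) *m (Om l *m Bm *m invmx (Om l)) = Om l *m (A *m Bm) *m invmx (Om l).
  by move=> A Bm; rewrite !mulmxA mulmxKV ?Om_unit.
rewrite !cm_star // -!trmx_mul mxtrace_tr !PM tr_conj.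
by rewrite mxtrace_mulC mulmxA.
Qed.

Lemma main_sec :
  [/\ (forall x y z, x \in B -> y \in B -> z \in B ->
         [/\ inO nu (S3 rho0 c a v x y z),
             inO nu (S1 star rho0 c a v x),
             gammaF red c a v rho x y z = red (S3 rho0 c a v x y z) &
             nF red star c a v rho x = red (S1 star rho0 c a v x)]),
      (forall x y z, x \in B -> y \in B -> z \in B ->
         gammaF red c a v rho x y z = gammaF red c a v rho y z x),
      (forall x y, x \in B -> y \in B ->
         \sum_(z <- B) gammaF red c a v rho (star x) y z
                        * nF red star c a v rho z = (x == y)%:R),
      (forall x y z, x \in B -> y \in B -> z \in B ->
         gammaF red c a v rho x y z
         = gammaF red c a v rho (star y) (star x) (star z)) &
      (forall x, x \in B -> nF red star c a v rho x = nF red star c a v rho (star x))].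
Proof.
split.
- move=> x y z xB yB zB.
  have [h1 h2] := S3_red xB yB zB; have [h3 h4] := S1_red xB.
  by split => //; [rewrite h2 gamma_tr | rewrite h4 nF_tr].
- by move=> x y z _ _ _; exact: gamma_cyc.
- exact: partC.
- exact: partD.
- exact: partE.
Qed.

End Main.

Theorem mainTheorem7 (G : porderZmodType) (K F : fieldType)
  (nu : K -> option G) (red : K -> F)
  (H : falgType K) (tau : H -> K) (star : H -> H) (B : seq H)
  (L : finType) (d : L -> nat) (rho0 : forall l, H -> 'M[K]_(d l))
  (c : L -> K) (a : L -> G) (v : G -> K)
  (rho : forall l, H -> 'M[K]_(d l)) :
  ordered_group G ->
  is_valuation nu ->
  is_residue_map nu red ->
  formally_real F ->
  is_trace_form tau ->
  is_invol_antiaut star ->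
  star_sym_basis tau star B ->
  split_semisimple rho0 ->
  (forall l, c l != 0) ->
  (forall x, tau x = \sum_l (c l)^-1 * chi rho0 l x) ->
  (forall l, nu (c l) = Some (- (a l *+ 2))) ->
  partial_section nu a v ->
  (forall l, of_type (rho l) (rho0 l)) ->
  (forall l, balanced nu tau star (a l) (rho l)) ->
  [/\ (* (a) *)
      (forall x y z, x \in B -> y \in B -> z \in B ->
         [/\ inO nu (S3 rho0 c a v x y z),
             inO nu (S1 star rho0 c a v x),
             gammaF red c a v rho x y z = red (S3 rho0 c a v x y z) &
             nF red star c a v rho x = red (S1 star rho0 c a v x)]),
      (* (b) *)
      (forall x y z, x \in B -> y \in B -> z \in B ->
         gammaF red c a v rho x y z = gammaF red c a v rho y z x),
      (* (c) *)
      (forall x y, x \in B -> y \in B ->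
         \sum_(z <- B) gammaF red c a v rho (star x) y z
                        * nF red star c a v rho z = (x == y)%:R),
      (* (d) *)
      (forall x y z, x \in B -> y \in B -> z \in B ->
         gammaF red c a v rho x y z
         = gammaF red c a v rho (star y) (star x) (star z)) &
      (* (e) *)
      (forall x, x \in B -> nF red star c a v rho x = nF red star c a v rho (star x))].
Proof.
move=> OG NU RED FR TF ST SB SS CNZ TAU NUC PS OT BAL.
exact: (main_sec OG NU RED FR TF ST SB SS CNZ TAU NUC PS OT BAL).
Qed.
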